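(* Let $T=(T_{r,k})_{r,k\ge 0}$ be a number triangle such that every major diagonal $(T_{r,k})_{k\ge 0}$ and every minor diagonal $(T_{r,k})_{r\ge 0}$ is an arithmetic sequence of integers. Then $T$ is a Generalized Rascal Triangle: there exist $c,d,d_1,d_2\in\mathbb{Z}$ with $T_{r,k}=c+kd_1+rd_2+rkd$ for all $r,k\ge 0$.
   Context: A number triangle is an array of integers $T_{r,k}$ indexed by integers $r,k\ge 0$, arranged so that row $n$ consists of entries with $r+k=n$. For $c,d,d_1,d_2\in\mathbb{Z}$, the Generalized Rascal Triangle $T(c,d,d_1,d_2)$ is the number triangle with $T_{r,k}=c+kd_1+rd_2+rkd$. *)

(* Defs.v *)
From Stdlib Require Import ZArith.
Open Scope Z_scope.

Definition arithmetic_seq (s : nat -> Z) : Prop :=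
  exists a d : Z, forall n : nat, s n = a + Z.of_nat n * d.

Definition gen_rascal (c d d1 d2 : Z) (r k : nat) : Z :=
  c + Z.of_nat k * d1 + Z.of_nat r * d2 + Z.of_nat r * Z.of_nat k * d.

(* Main.v *)
Require Import Defs.
From Stdlib Require Import ZArith Lia.
Open Scope Z_scope.

Lemma arith_form (s : nat -> Z) : arithmetic_seq s ->
  forall n, s n = s 0%nat + Z.of_nat n * (s 1%nat - s 0%nat).
Proof.
  intros [a [d H]] n. rewrite (H n), (H 0%nat), (H 1%nat). cbn [Z.of_nat]. lia.
Qed.

Theorem mainTheorem6 (T : nat -> nat -> Z)
  (Hmajor : forall r : nat, arithmetic_seq (fun k => T r k))
  (Hminor : forall k : nat, arithmetic_seq (fun r => T r k)) :
  exists c d d1 d2 : Z, forall r k : nat, T r k = gen_rascal c d d1 d2 r k.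
Proof.
  exists (T 0%nat 0%nat), (T 1%nat 1%nat - T 0%nat 1%nat - T 1%nat 0%nat + T 0%nat 0%nat),
    (T 0%nat 1%nat - T 0%nat 0%nat), (T 1%nat 0%nat - T 0%nat 0%nat).
  intros r k. unfold gen_rascal.
  rewrite (arith_form _ (Hmajor r) k). cbn [Z.of_nat].
  rewrite (arith_form _ (Hminor 0%nat) r), (arith_form _ (Hminor 1%nat) r). cbn [Z.of_nat].
  ring.
Qed.
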